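(* For every $n\ge 1$, $c_{n+1}\le (1-2^{-n})c_n+2^{-n}$.
   Context: For $n\ge1$, $c_n$ denotes the probability that $G\sim G(n,1/2)$ is not even-degenerate. A graph on $n$ vertices is even-degenerate if there is an ordering $v_1,\dots,v_n$ of its vertices such that for each $1\le i\le n-2$, $v_i$ has an even number of neighbours in $\{v_{i+1},\dots,v_n\}$. *)

(* Defs.v *)
From mathcomp Require Import all_boot all_order all_fingroup all_algebra.
Set Implicit Arguments. Unset Strict Implicit. Unset Printing Implicit Defensive.
Import Order.TTheory GRing.Theory Num.Theory.

(* A simple graph on the vertex set 'I_n is encoded by its edge set
   E : {set 'I_n * 'I_n} consisting only of pairs (u,v) with u < v;
   each unordered edge {u,v} (u < v) is represented once as (u,v). *)
Definition upper_pairs (n : nat) : {set 'I_n * 'I_n} :=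
  [set p : 'I_n * 'I_n | (p.1 < p.2)%N].

Definition is_graph (n : nat) (E : {set 'I_n * 'I_n}) : bool :=
  E \subset upper_pairs n.

Definition adj (n : nat) (E : {set 'I_n * 'I_n}) (u v : 'I_n) : bool :=
  ((u, v) \in E) || ((v, u) \in E).

(* Even-degenerate: there is an ordering v_0,...,v_{n-1} (given by a
   permutation s, v_i = s i) such that for each 0-indexed i < n-2
   (i.e. 1-indexed i <= n-2), v_i has an even number of neighbours
   among v_{i+1},...,v_{n-1}. *)
Definition even_degenerate (n : nat) (E : {set 'I_n * 'I_n}) : bool :=
  [exists s : 'S_n, forall i : 'I_n, (i < n - 2)%N ==>
     ~~ odd #|[set j : 'I_n | (i < j)%N && adj E (s i) (s j)]|].

(* c_n : probability that G ~ G(n,1/2) is not even-degenerate, i.e.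
   (#graphs on n labelled vertices that are not even-degenerate) / 2^(n choose 2),
   with all graphs on 'I_n equally likely. *)
Definition c (n : nat) : rat :=
  (#|[set E : {set 'I_n * 'I_n} | is_graph E && ~~ even_degenerate E]|%:R
   / #|[set E : {set 'I_n * 'I_n} | is_graph E]|%:R)%R.

(* Main.v *)
Require Import Defs.
From mathcomp Require Import all_boot all_order all_fingroup all_algebra.
From mathcomp Require Import zify ring.
Import Order.TTheory GRing.Theory Num.Theory.
Set Implicit Arguments. Unset Strict Implicit. Unset Printing Implicit Defensive.

Lemma lift_val n (v : 'I_n) (a : 'I_n.-1) : (lift v a : nat) = ((v <= a) + a)%N.
Proof. by []. Qed.

Lemma lift_ltn n (v : 'I_n) (a b : 'I_n.-1) : (lift v a < lift v b)%N = (a < b)%N.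
Proof. rewrite !lift_val; case: (leqP v a); case: (leqP v b) => /=; lia. Qed.

Definition del n (v : 'I_n.+1) (E : {set 'I_n.+1 * 'I_n.+1}) : {set 'I_n * 'I_n} :=
  [set p | (lift v p.1, lift v p.2) \in E].

Lemma adj_del n (v : 'I_n.+1) E a b : adj (del v E) a b = adj E (lift v a) (lift v b).
Proof. by rewrite /adj !inE. Qed.

Lemma del_graph n (v : 'I_n.+1) E : is_graph E -> is_graph (del v E).
Proof.
move=> /subsetP gE; apply/subsetP => p; rewrite inE => /gE; rewrite !inE /=.
by rewrite lift_ltn.
Qed.

Lemma adjC n (E : {set 'I_n * 'I_n}) x y : adj E x y = adj E y x.
Proof. by rewrite /adj orbC. Qed.

Lemma adj_irr n (E : {set 'I_n * 'I_n}) x : is_graph E -> adj E x x = false.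
Proof.
move=> /subsetP gE; rewrite /adj orbb; apply/negP => /gE; by rewrite inE ltnn.
Qed.

Lemma graph_mem n (E : {set 'I_n * 'I_n}) p : is_graph E ->
  (p \in E) = (p.1 < p.2)%N && adj E p.1 p.2.
Proof.
move=> /subsetP gE; case: p => x y /=; rewrite /adj.
case hE: ((x, y) \in E); first by have := gE _ hE; rewrite inE /= => ->.
case hE': ((y,x) \in E); last by rewrite andbF.
have := gE _ hE'; rewrite inE /= andbT; by case: ltngtP.
Qed.

Lemma graph_eq n (E1 E2 : {set 'I_n * 'I_n}) : is_graph E1 -> is_graph E2 ->
  (forall x y, adj E1 x y = adj E2 x y) -> E1 = E2.
Proof.
move=> g1 g2 h; apply/setP => p; by rewrite (graph_mem _ g1) (graph_mem _ g2) h.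
Qed.

Lemma reconstruct n (v : 'I_n.+1) (E1 E2 : {set 'I_n.+1 * 'I_n.+1}) :
  is_graph E1 -> is_graph E2 -> del v E1 = del v E2 ->
  (forall a, adj E1 v (lift v a) = adj E2 v (lift v a)) -> E1 = E2.
Proof.
move=> g1 g2 hd ha; apply: graph_eq => // x y.
case: (unliftP v x) => [a ->|->]; case: (unliftP v y) => [b ->|->].
- by rewrite -!adj_del hd.
- by rewrite adjC ha adjC.
- exact: ha.
- by rewrite !adj_irr.
Qed.

Definition deg n (E : {set 'I_n * 'I_n}) u := #|[set w | adj E u w]|.

Lemma card_split n (v : 'I_n) (P : pred 'I_n) :
  #|[set w | P w]| = (P v + #|[set b : 'I_n.-1 | P (lift v b)]|)%N.
Proof.
rewrite (cardsD1 v) inE; congr (_ + _)%N.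
have -> : [set w | P w] :\ v = lift v @: [set b : 'I_n.-1 | P (lift v b)].
  apply/setP => w; rewrite !inE; case: (unliftP v w) => [a ->|->].
    rewrite mem_imset ?inE; last exact: lift_inj.
    by rewrite eq_sym (negbTE (neq_lift _ _)).
  rewrite eqxx /=; apply/esym/negP => /imsetP [a _] /eqP; by rewrite (negbTE (neq_lift _ _)).
by rewrite card_imset //; exact: lift_inj.
Qed.

Lemma deg_split n (v : 'I_n.+1) (E : {set 'I_n.+1 * 'I_n.+1}) a :
  deg E (lift v a) = (adj E (lift v a) v + deg (del v E) a)%N.
Proof.
rewrite /deg (card_split v); congr (_ + _)%N; apply: eq_card => b; by rewrite !inE adj_del.
Qed.

Lemma deg_v n (v : 'I_n.+1) (E : {set 'I_n.+1 * 'I_n.+1}) : is_graph E ->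
  deg E v = #|[set b : 'I_n | adj E v (lift v b)]|.
Proof. by move=> g; rewrite /deg (card_split v) adj_irr. Qed.

Lemma parity_pin m (a : 'I_m) (Q1 Q2 : pred 'I_m) :
  (forall b, b != a -> Q1 b = Q2 b) ->
  odd #|[set b | Q1 b]| = odd #|[set b | Q2 b]| -> Q1 a = Q2 a.
Proof.
move=> h; rewrite !(card_split a).
have -> : [set b | Q1 (lift a b)] = [set b | Q2 (lift a b)].
  apply/setP => b; rewrite !inE h //; rewrite eq_sym; exact: neq_lift.
by rewrite !oddD !oddb => /addIb.
Qed.

Section Ext.
Variables (n : nat) (v : 'I_n.+1) (s : 'S_n).
Definition tfun (i : 'I_n.+1) : 'I_n.+1 :=
  if unlift ord0 i is Some j then lift v (s j) else v.
Lemma tfun_inj : injective tfun.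
Proof.
move=> x y; rewrite /tfun.
case: (unliftP ord0 x) => [a ->|->]; case: (unliftP ord0 y) => [b ->|->] //.
- by move/lift_inj/perm_inj => ->.
- by move=> /eqP; rewrite eq_sym (negbTE (neq_lift _ _)).
- by move=> /eqP; rewrite (negbTE (neq_lift _ _)).
Qed.
End Ext.

Lemma ext_ed n (E : {set 'I_n.+1 * 'I_n.+1}) v : is_graph E -> ~~ odd (deg E v) ->
  even_degenerate (del v E) -> even_degenerate E.
Proof.
move=> gE ev /existsP [s /forallP hs].
apply/existsP; exists (perm (@tfun_inj n v s)); apply/forallP => i; apply/implyP => hi.
rewrite permE; move: hi; case: (unliftP ord0 i) => [k ->|->] hi.
- have tk : tfun v s (lift ord0 k) = lift v (s k) by rewrite /tfun liftK.
  rewrite tk.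
  have -> : [set j : 'I_n.+1 | (lift ord0 k < j)%N && adj E (lift v (s k)) (perm (@tfun_inj n v s) j)]
     = lift ord0 @: [set m : 'I_n | (k < m)%N && adj (del v E) (s k) (s m)].
    apply/setP => j; rewrite inE permE; case: (unliftP ord0 j) => [m ->|->].
      rewrite mem_imset; last exact: lift_inj.
      by rewrite inE !lift0 ltnS /tfun liftK adj_del.
    rewrite lift0 /=; apply/esym/negP => /imsetP [a _] /eqP.
    by rewrite (negbTE (neq_lift _ _)).
  rewrite card_imset; last exact: lift_inj.
  apply: (implyP (hs k)); move: hi; rewrite lift0; lia.
- have t0 : tfun v s ord0 = v by rewrite /tfun unlift_none.
  rewrite t0.
  have -> : [set j : 'I_n.+1 | (@ord0 n < j)%N && adj E v (perm (@tfun_inj n v s) j)]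
     = (perm (@tfun_inj n v s)) @^-1: [set w | adj E v w].
    apply/setP => j; rewrite !inE permE; case: (unliftP ord0 j) => [m ->|->].
      by rewrite lift0.
    by rewrite t0 adj_irr.
  by rewrite card_preimset //; exact: perm_inj.
Qed.

Definition ext n (H : {set 'I_n * 'I_n}) (S : {set 'I_n}) : {set 'I_n.+1 * 'I_n.+1} :=
  [set p | match unlift ord_max p.1, unlift ord_max p.2 with
           | Some a, Some b => (a, b) \in H
           | Some a, None => a \in S
           | _, _ => false end].

Lemma ext_graph n (H : {set 'I_n * 'I_n}) S : is_graph H -> is_graph (ext H S).
Proof.
move=> /subsetP gH; apply/subsetP => [[x y]]; rewrite !inE /=.
case: (unliftP ord_max x) => [a ->|->]; case: (unliftP ord_max y) => [b ->|->] //.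
- by move/gH; rewrite inE lift_ltn.
- by rewrite lift_max => _; exact: ltn_ord.
Qed.

Lemma del_ext n (H : {set 'I_n * 'I_n}) S : del ord_max (ext H S) = H.
Proof. by apply/setP => p; rewrite !inE /= !liftK; case: p. Qed.

Lemma nbr_ext n (H : {set 'I_n * 'I_n}) S :
  [set a | (lift ord_max a, ord_max) \in ext H S] = S.
Proof. by apply/setP => a; rewrite !inE /= liftK unlift_none. Qed.

Definition Gs n := [set E : {set 'I_n * 'I_n} | is_graph E].
Definition Bad n := [set E : {set 'I_n * 'I_n} | is_graph E && ~~ even_degenerate E].

Lemma T_bound n : (#|Gs n| * 2 ^ n <= #|Gs n.+1|)%N.
Proof.
have inj : injective (fun p : {set 'I_n * 'I_n} * {set 'I_n} => ext p.1 p.2).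
  move=> [H1 S1] [H2 S2] /= e.
  have := congr1 (del ord_max) e; have := congr1 (fun E : {set 'I_n.+1 * 'I_n.+1} => [set a : 'I_n | (lift ord_max a, ord_max) \in E]) e.
  by rewrite /= !del_ext !nbr_ext => -> ->.
have -> : (#|Gs n| * 2 ^ n)%N = #|setX (Gs n) [set: {set 'I_n}]|.
  rewrite cardsX; congr (_ * _)%N; by rewrite -powersetT card_powerset cardsT card_ord.
rewrite -(card_imset _ inj); apply: subset_leq_card; apply/subsetP => E.
move=> /imsetP [[H S]]; rewrite !inE /= => /andP [gH _] ->; exact: ext_graph.
Qed.

Section Main.
Variable n : nat.

Definition firstEven (E : {set 'I_n.+1 * 'I_n.+1}) (v : 'I_n.+1) : bool :=
  [&& (v < n)%N, ~~ odd (deg E v) & [forall u : 'I_n.+1, (u < v)%N ==> odd (deg E u)]].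

Definition code (E : {set 'I_n.+1 * 'I_n.+1}) (v : 'I_n.+1) : {set 'I_n} :=
  [set a : 'I_n | (v == a :> nat) || ((v < a)%N && adj E v (lift v a))].

Definition Tgt := (({set 'I_n * 'I_n} * {set 'I_n}) + {set 'I_n * 'I_n})%type.

Definition F (E : {set 'I_n.+1 * 'I_n.+1}) : Tgt :=
  if [pick v | firstEven E v] is Some v then inl (del v E, code E v)
  else inr (del ord_max E).

Lemma all_odd E : (forall v, ~~ firstEven E v) ->
  forall u : 'I_n.+1, (u < n)%N -> odd (deg E u).
Proof.
move=> h; suff H : forall k (u : 'I_n.+1), (u < k)%N -> (u < n)%N -> odd (deg E u).
  by move=> u; exact: (H u.+1 u (ltnSn u)).
elim=> [//|k IH] u; rewrite ltnS leq_eqVlt => /orP [/eqP uk|]; last exact: IH.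
move=> un; apply/negPn/negP => ev; have := h u; rewrite /firstEven un ev /=.
move/negP; apply; apply/forallP => w; apply/implyP => wu; apply: IH; lia.
Qed.

Lemma odd_pin (v : 'I_n.+1) (E1 E2 : {set 'I_n.+1 * 'I_n.+1}) a :
  del v E1 = del v E2 -> odd (deg E1 (lift v a)) -> odd (deg E2 (lift v a)) ->
  adj E1 v (lift v a) = adj E2 v (lift v a).
Proof.
move=> ed; rewrite !deg_split !oddD !oddb ed adjC [adj E2 _ _]adjC.
by case: (adj E1 _ _); case: (adj E2 _ _); case: (odd _).
Qed.

Lemma main_bound : (#|Bad n.+1| <= #|Bad n| * (2 ^ n).-1 + #|Gs n|)%N.
Proof.
pose B : {set Tgt} := inl @: setX (Bad n) [set~ set0] :|: inr @: Gs n.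
have cardB : (#|B| <= #|Bad n| * (2 ^ n).-1 + #|Gs n|)%N.
  apply: leq_trans (leq_card_setU _ _).1 _.
  rewrite !card_imset; [|exact: inr_inj|exact: inl_inj].
  rewrite cardsX cardsC1 -cardsT -powersetT card_powerset cardsT card_ord.
  by [].
have sub : F @: Bad n.+1 \subset B.
  apply/subsetP => x /imsetP [E hE ->]; move: hE; rewrite inE => /andP [gE nED].
  rewrite /F; case: pickP => [v hv|hn].
  - apply/setUP; left; rewrite mem_imset; last exact: inl_inj.
    move: hv => /and3P [vn ev _].
    rewrite !inE del_graph //=; apply/andP; split.
      apply/negP => /(ext_ed gE ev) h; by rewrite h in nED.
    apply/eqP => c0; have : Ordinal vn \in code E v by rewrite inE eqxx.
    by rewrite c0 inE.
  - apply/setUP; right; rewrite mem_imset; last exact: inr_inj.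
    by rewrite inE del_graph.
have inj : {in Bad n.+1 &, injective F}.
  move=> E1 E2; rewrite !inE => /andP [g1 _] /andP [g2 _]; rewrite /F.
  case: pickP => [v1 h1|h1]; case: pickP => [v2 h2|h2] //.
  - case=> ed ec.
    have vv : v1 = v2.
      move: (h1) (h2) => /and3P [v1n _ _] /and3P [v2n _ _].
      have m1 : Ordinal v1n \in code E1 v1 by rewrite inE eqxx.
      have m2 : Ordinal v2n \in code E2 v2 by rewrite inE eqxx.
      rewrite ec inE /= in m1; rewrite -ec inE /= in m2.
      apply/val_inj => /=.
      case/orP: m1 => [/eqP -> //| /andP [lt1 _]].
      case/orP: m2 => [/eqP -> //| /andP [lt2 _]]; lia.
    subst v2.
    move: h1 h2 => /and3P [v1n ev1 /forallP o1] /and3P [_ ev2 /forallP o2].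
    have other : forall b : 'I_n, (v1 : nat) != b ->
        adj E1 v1 (lift v1 b) = adj E2 v1 (lift v1 b).
      move=> b nb; case: (ltngtP b v1) => [blt|bgt|beq].
      + apply: odd_pin => //.
          apply: (implyP (o1 _)); rewrite lift_val; move: blt; case: leqP => /=; lia.
        apply: (implyP (o2 _)); rewrite lift_val; move: blt; case: leqP => /=; lia.
      + have := congr1 (fun X : {set 'I_n} => b \in X) ec; rewrite /= !inE (negbTE nb) bgt /=.
        by [].
      + by rewrite beq eqxx in nb.
    apply: (reconstruct g1 g2 ed) => a.
    case: (eqVneq (v1 : nat) a) => [va|]; last exact: other.
    apply: (parity_pin (Q1 := fun b => adj E1 v1 (lift v1 b))
                       (Q2 := fun b => adj E2 v1 (lift v1 b))).
      move=> b nb; apply: other; apply/eqP => vb; move/eqP: nb; apply.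
      by apply/val_inj; rewrite /= -vb -va.
    by rewrite -!deg_v // (negbTE ev1) (negbTE ev2).
  - case=> ed.
    apply: (reconstruct g1 g2 ed) => a.
    have ho1 := all_odd (fun v => negbT (h1 v)).
    have ho2 := all_odd (fun v => negbT (h2 v)).
    apply: odd_pin => //; [apply: ho1 | apply: ho2]; by rewrite lift_max.
rewrite -(card_in_imset inj); exact: leq_trans (subset_leq_card sub) cardB.
Qed.
End Main.
Unset Implicit Arguments.
Local Open Scope ring_scope.

Lemma arith (n X T B N : nat) : (X <= B * (2 ^ n).-1 + N)%N -> (N * 2 ^ n <= T)%N ->
  (0 < N)%N ->
  X%:R / T%:R <= (1 - 2%:R ^- n) * (B%:R / N%:R) + 2%:R ^- n :> rat.
Proof.
move=> hX hT hN.
have p0 : (0 < 2 ^ n)%N by rewrite expn_gt0.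
set p : rat := 2%:R ^+ n.
have pE : (2 ^ n)%:R = p by rewrite natrX.
have pp : 0 < p by rewrite -pE ltr0n.
have Np : 0 < N%:R :> rat by rewrite ltr0n.
have Tp : 0 < T%:R :> rat.
  rewrite ltr0n; apply: leq_trans hT; by rewrite muln_gt0 hN.
have -> : (1 - p^-1) * (B%:R / N%:R) + p^-1 = (B%:R * (p - 1) + N%:R) / (p * N%:R).
  by field; apply/andP; split; rewrite gt_eqF.
have hY : X%:R <= B%:R * (p - 1) + N%:R :> rat.
  have := hX; rewrite -(ler_nat rat) natrD natrM -subn1 natrB // pE => ->.
  by [].
have hpN : p * N%:R <= T%:R :> rat by rewrite -pE -natrM mulnC ler_nat.
rewrite ler_pdivrMr //.
apply: (le_trans hY).
have Yge : 0 <= (B%:R * (p - 1) + N%:R) / (p * N%:R) :> rat.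
  apply: divr_ge0; last by rewrite mulr_ge0 // ltW.
  apply: addr_ge0 => //; apply: mulr_ge0 => //; rewrite subr_ge0 -pE ler1n.
  by [].
apply: le_trans (ler_wpM2l Yge hpN).
by rewrite divfK // mulf_neq0 // gt_eqF.
Qed.

Theorem mainTheorem15 (n : nat) (hn : (1 <= n)%N) :
  c n.+1 <= (1 - 2%:R ^- n) * c n + 2%:R ^- n.
Proof.
apply: arith (main_bound n) (T_bound n) _.
rewrite card_gt0; apply/set0Pn; exists set0; by rewrite inE /is_graph sub0set.
Qed.
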